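(* Consider the TEP model described in the context. Let $\rho^1,\dots,\rho^m$, $m>1$, be directed paths of buses, each consisting of consecutive bus pairs that form established corridors, such that all paths have the same starting bus and the same ending bus, and the intermediate buses of distinct paths are disjoint: writing $\rho^r=(i^r_0,i^r_1),\dots,(i^r_{L_r-1},i^r_{L_r})$, we have $i^r_0=i^{r'}_0$, $i^r_{L_r}=i^{r'}_{L_{r'}}$ and $\{i^r_t\}_{t=1}^{L_r-1}\cap\{i^{r'}_t\}_{t=1}^{L_{r'}-1}=\emptyset$ for $r\ne r'$. For each path $\rho^r$ and each $t$, fix an existing-line index $k^r_t\in\{1,\dots,\omega^0_{i^r_{t-1}i^r_t}\}$, and define $$\pi^r_0=\sum_{t=1}^{L_r}x_{i^r_{t-1}i^r_t,k^r_t}\,\overline P^0_{i^r_{t-1}i^r_t,k^r_t},\qquad \pi^r_t=\operatorname{sgn}(i^r_{t-1}-i^r_t)\,x_{i^r_{t-1}i^r_t,k^r_t}\ (t=1,\dots,L_r).$$ Then for every $r=1,\dots,m$ the two-sided inequality $$-\min\{\pi^n_0\}_{n=1}^m\;\le\;\sum_{t=1}^{L_r}\pi^r_t\,\tilde P^0_{i^r_{t-1}i^r_t,k^r_t}\;\le\;\min\{\pi^n_0\}_{n=1}^m$$ is valid for TEP (satisfied by every feasible solution), for any such choices of line indices.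
   Context: TEP model (DC-power-flow transmission expansion planning, disjunctive MILP). $B$ is a finite set of buses (integers); $\Omega$ is a set of corridors $(i,j)$ of buses, stored with $i<j$. Corridor $(i,j)$ has $\omega^0_{ij}\ge 0$ existing lines and $\bar\omega_{ij}\ge0$ candidate lines. Corridor $(i,j)$ is *established* if $\omega^0_{ij}>0$ and an *expansion corridor* if $\omega^0_{ij}=0$. Line $k$ of corridor $(i,j)$ has susceptance $b_{ij,k}$ and reactance $x_{ij,k}=-1/b_{ij,k}$; existing lines have capacity $\overline P^0_{ij,k}$, candidate lines capacity $\overline P_{ij,k}$. Further parameters: demands $d_n$, generation limits $\overline g_n$, angle limit $\overline\theta$, big-M constants $M_{ij}$, costs. Variables: binary $y_{ij,k}$, flows $P^0_{ij,k}$ (existing lines) and $P_{ij,k}$ (candidate lines), generation $g_n\ge0$, bus angles $\theta_n$ (free). Constraints: for each bus $n$, $\sum_{(n,i)\in\Omega}\big(\sum_k P^0_{ni,k}+\sum_k P_{ni,k}\big)-\sum_{(i,n)\in\Omega}\big(\sum_k P^0_{in,k}+\sum_k P_{in,k}\big)+g_n=d_n$; $-\overline P^0_{ij,k}\le P^0_{ij,k}\le \overline P^0_{ij,k}$; $-\overline P_{ij,k}y_{ij,k}\le P_{ij,k}\le\overline P_{ij,k}y_{ij,k}$; $x_{ij,k}P^0_{ij,k}-(\theta_i-\theta_j)=0$ for existing lines; $-M_{ij}(1-y_{ij,k})\le x_{ij,k}P_{ij,k}-(\theta_i-\theta_j)\le M_{ij}(1-y_{ij,k})$ for candidate lines; $g_n\le\overline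 g_n$; $-\overline\theta\le\theta_i-\theta_j\le\overline\theta$ for $(i,j)\in\Omega$; $y_{ij,k}\in\{0,1\}$. An inequality is *valid for TEP* if every feasible point of this model satisfies it. Notation along paths: for a bus pair traversed as $(i,j)$ with $i>j$ (stored corridor $(j,i)$), set $x_{ij,k}=x_{ji,k}$, $\overline P^0_{ij,k}=\overline P^0_{ji,k}$ and $P^0_{ij,k}=-P^0_{ji,k}$. $\operatorname{sgn}(a)=1$ if $a>0$, $-1$ if $a<0$. Define $\tilde P^0_{ij,k}=\operatorname{sgn}(j-i)\,P^0_{ij,k}$. *)

(* Defs.v *)
From HB Require Import structures.
From mathcomp Require Import all_boot all_order all_algebra.
Set Implicit Arguments. Unset Strict Implicit. Unset Printing Implicit Defensive.
Import Order.TTheory GRing.Theory Num.Theory.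
Local Open Scope ring_scope.

(* Data of a TEP instance.  Line indices k are 1-based:
   existing lines of corridor (i,j): k = 1..w0 i j,
   candidate lines of corridor (i,j): k = 1..wbar i j. *)
Record TEPdata (R : realFieldType) := {
  Buses : seq int;
  Omega : seq (int * int);            (* corridors (i,j), stored with i<j *)
  w0    : int -> int -> nat;
  wbar  : int -> int -> nat;
  susc  : int -> int -> nat -> R;
  P0max : int -> int -> nat -> R;
  Pmax  : int -> int -> nat -> R;
  dem   : int -> R;
  gmax  : int -> R;
  thmax : R;
  bigM  : int -> int -> R
}.

Definition reac (R : realFieldType) (T : TEPdata R) (i j : int) (k : nat) : R :=
  - (susc T i j k)^-1.

Record TEPsol (R : realFieldType) := {
  ybin : int -> int -> nat -> bool;
  Pex  : int -> int -> nat -> R;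
  Pcand : int -> int -> nat -> R;
  gen  : int -> R;
  th   : int -> R
}.

(* Standing well-formedness of the instance: B and Omega are sets, corridors are
   stored with i<j and join buses of B, and all lines have positive reactance
   (negative susceptance), the usual DC power-flow convention. *)
Definition wf_TEP (R : realFieldType) (T : TEPdata R) : Prop :=
  [/\ uniq (Buses T), uniq (Omega T),
      (forall c, c \in Omega T -> [/\ c.1 < c.2, c.1 \in Buses T & c.2 \in Buses T]) &
      (forall c k, c \in Omega T ->
         ((1 <= k <= w0 T c.1 c.2)%N \/ (1 <= k <= wbar T c.1 c.2)%N) ->
         susc T c.1 c.2 k < 0)].

Definition corrflow (R : realFieldType) (T : TEPdata R) (s : TEPsol R) (c : int * int) : R :=
  \sum_(1 <= k < (w0 T c.1 c.2).+1) Pex s c.1 c.2 k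
  + \sum_(1 <= k < (wbar T c.1 c.2).+1) Pcand s c.1 c.2 k.

Definition feasible (R : realFieldType) (T : TEPdata R) (s : TEPsol R) : Prop :=
  [/\
      (forall n, n \in Buses T ->
         \sum_(c <- Omega T | c.1 == n) corrflow T s c
         - \sum_(c <- Omega T | c.2 == n) corrflow T s c + gen s n = dem T n),
      (forall c k, c \in Omega T -> (1 <= k <= w0 T c.1 c.2)%N ->
         (- P0max T c.1 c.2 k <= Pex s c.1 c.2 k <= P0max T c.1 c.2 k) /\
         reac T c.1 c.2 k * Pex s c.1 c.2 k - (th s c.1 - th s c.2) = 0),
      (forall c k, c \in Omega T -> (1 <= k <= wbar T c.1 c.2)%N ->
         (- Pmax T c.1 c.2 k * (ybin s c.1 c.2 k)%:R <= Pcand s c.1 c.2 k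
            <= Pmax T c.1 c.2 k * (ybin s c.1 c.2 k)%:R) /\
         (- bigM T c.1 c.2 * (1 - (ybin s c.1 c.2 k)%:R)
            <= reac T c.1 c.2 k * Pcand s c.1 c.2 k - (th s c.1 - th s c.2)
            <= bigM T c.1 c.2 * (1 - (ybin s c.1 c.2 k)%:R))),
      (forall n, n \in Buses T -> 0 <= gen s n <= gmax T n) &
      (forall c, c \in Omega T -> - thmax T <= th s c.1 - th s c.2 <= thmax T)].

(* t-th bus i_t of the path p = [i_0; ...; i_L] *)
Definition node (p : seq int) (t : nat) : int := nth 0 p t.

Definition stored (i j : int) : int * int := if i < j then (i, j) else (j, i).

Definition xd (R : realFieldType) (T : TEPdata R) (i j : int) (k : nat) : R :=
  reac T (stored i j).1 (stored i j).2 k.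
Definition P0maxd (R : realFieldType) (T : TEPdata R) (i j : int) (k : nat) : R :=
  P0max T (stored i j).1 (stored i j).2 k.
(* P^0_{ij,k} = - P^0_{ji,k} when i > j *)
Definition P0d (R : realFieldType) (s : TEPsol R) (i j : int) (k : nat) : R :=
  if i < j then Pex s i j k else - Pex s j i k.
Definition sgnR (R : realFieldType) (a : int) : R := (sgz a)%:~R.
Definition P0tilde (R : realFieldType) (s : TEPsol R) (i j : int) (k : nat) : R :=
  sgnR R (j - i) * P0d s i j k.

Definition established (R : realFieldType) (T : TEPdata R) (i j : int) : Prop :=
  stored i j \in Omega T /\ (0 < w0 T (stored i j).1 (stored i j).2)%N.

Definition is_path (R : realFieldType) (T : TEPdata R) (p : seq int) : Prop :=
  (2 <= size p)%N /\
  forall t, (1 <= t < size p)%N -> established T (nth 0 p t.-1) (nth 0 p t).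

Definition pi0 (R : realFieldType) (T : TEPdata R) (p : seq int) (kp : nat -> nat) : R :=
  \sum_(1 <= t < size p)
     xd T (nth 0 p t.-1) (nth 0 p t) (kp t) * P0maxd T (nth 0 p t.-1) (nth 0 p t) (kp t).

Definition pit (R : realFieldType) (T : TEPdata R) (p : seq int) (kp : nat -> nat) (t : nat) : R :=
  sgnR R (nth 0 p t.-1 - nth 0 p t) * xd T (nth 0 p t.-1) (nth 0 p t) (kp t).

Definition pathsum (R : realFieldType) (T : TEPdata R) (s : TEPsol R) (p : seq int)
  (kp : nat -> nat) : R :=
  \sum_(1 <= t < size p) pit T p kp t * P0tilde s (nth 0 p t.-1) (nth 0 p t) (kp t).

(* Main.v *)
Require Import Defs.
From HB Require Import structures.
From mathcomp Require Import all_boot all_order all_algebra.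
Import Order.TTheory GRing.Theory Num.Theory.
Local Open Scope ring_scope.

Lemma step (R : realFieldType) (T : TEPdata R) (s : TEPsol R) (a b : int) (kk : nat) :
  wf_TEP T -> feasible T s -> established T a b ->
  (1 <= kk <= w0 T (stored a b).1 (stored a b).2)%N ->
  sgnR R (a - b) * xd T a b kk * P0tilde s a b kk = s.(th) b - s.(th) a /\
  `|s.(th) b - s.(th) a| <= xd T a b kk * P0maxd T a b kk.
Proof.
move=> [_ _ Hom Hsu] [_ Hex _ _ _] [Hin _] Hk.
have [Hlt _ _] := Hom _ Hin.
have Hs := Hsu _ kk Hin (or_introl Hk).
have [/andP [Hc1 Hc2] Hohm] := Hex _ _ Hin Hk.
have xpos : 0 < reac T (stored a b).1 (stored a b).2 kk.
  by rewrite /reac oppr_gt0 invr_lt0.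
move: Hlt Hs Hc1 Hc2 Hohm xpos.
rewrite /xd /P0maxd /P0tilde /P0d /sgnR /stored.
case: (ltgtP a b) => [ab|ba|->] /=; last by rewrite ltxx.
- have -> : sgz (a - b) = -1 by apply/eqP; rewrite sgz_cp0 subr_lt0.
  have -> : sgz (b - a) = 1 by apply/eqP; rewrite sgz_cp0 subr_gt0.
  move=> _ _ H1 H2 Hohm xpos.
  have E : th s a - th s b = reac T a b kk * Pex s a b kk.
    by apply/eqP; rewrite eq_sym -subr_eq0 Hohm.
  split.
    by rewrite mul1r -opprB E mulN1r mulNr.
  rewrite distrC E normrM (gtr0_norm xpos) ler_pM2l //.
  by rewrite ler_norml H1 H2.
- have -> : sgz (a - b) = 1 by apply/eqP; rewrite sgz_cp0 subr_gt0.
  have -> : sgz (b - a) = -1 by apply/eqP; rewrite sgz_cp0 subr_lt0.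
  have ab : ~~ (a < b) by rewrite -leNgt ltW.
  move=> _ _ H1 H2 Hohm xpos.
  have E : th s b - th s a = reac T b a kk * Pex s b a kk.
    by apply/eqP; rewrite eq_sym -subr_eq0 Hohm.
  split.
    by rewrite mul1r E mulN1r opprK.
  rewrite E normrM (gtr0_norm xpos) ler_pM2l //.
  by rewrite ler_norml H1 H2.
Qed.

Theorem lemma2 (R : realFieldType) (T : TEPdata R) (m : nat)
  (rho : 'I_m -> seq int) (k : 'I_m -> nat -> nat) :
  wf_TEP T ->
  (1 < m)%N ->
  (forall r, is_path T (rho r)) ->
  (forall r r', head 0%R (rho r) = head 0%R (rho r')) ->
  (forall r r', last 0%R (rho r) = last 0%R (rho r')) ->
  (forall r r', r != r' -> forall t t',
      (1 <= t < (size (rho r)).-1)%N -> (1 <= t' < (size (rho r')).-1)%N ->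
      node (rho r) t != node (rho r') t') ->
  (forall r t, (1 <= t < size (rho r))%N ->
      (1 <= k r t <= w0 T (stored (node (rho r) t.-1) (node (rho r) t)).1
                          (stored (node (rho r) t.-1) (node (rho r) t)).2)%N) ->
  forall s : TEPsol R, feasible T s ->
  forall r : 'I_m,
    - (\big[Num.min/pi0 T (rho r) (k r)]_(n < m) pi0 T (rho n) (k n))
      <= pathsum T s (rho r) (k r)
      <= \big[Num.min/pi0 T (rho r) (k r)]_(n < m) pi0 T (rho n) (k n).
Proof.
move=> wf _ Hpath Hhead Hlast _ Hk s feas r.
pose D (p : seq int) := th s (last 0 p) - th s (head 0 p).
have key : forall n, pathsum T s (rho n) (k n) = D (rho n) /\
                     `|D (rho n)| <= pi0 T (rho n) (k n).
  move=> n; have [Hsz Hest] := Hpath n.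
  have St : forall t, (1 <= t < size (rho n))%N -> _ :=
    fun t Ht => step _ _ _ _ _ (k n t) wf feas (Hest t Ht) (Hk n t Ht).
  have HD : D (rho n) = \sum_(1 <= t < size (rho n))
            (th s (nth 0 (rho n) t) - th s (nth 0 (rho n) t.-1)).
    rewrite big_add1 /=.
    rewrite (telescope_sumr (fun t => th s (nth 0 (rho n) t))) //.
    rewrite /D (last_nth 0) -nth0.
    by case: (rho n) Hsz.
  split.
    rewrite HD /pathsum; apply: eq_big_nat => t Ht.
    by rewrite /pit (proj1 (St t Ht)).
  rewrite HD /pi0; apply: le_trans (ler_norm_sum _ _ _) _.
  rewrite big_nat_cond [X in _ <= X]big_nat_cond; apply: ler_sum => t.
  rewrite andbT => Ht.
  exact: (proj2 (St t Ht)).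
have Dr : forall n, D (rho n) = D (rho r).
  by move=> n; rewrite /D (Hhead n r) (Hlast n r).
rewrite (proj1 (key r)) -ler_norml.
apply: (big_ind (fun x => `|D (rho r)| <= x)).
- exact: (proj2 (key r)).
- by move=> x y Hx Hy; rewrite le_min Hx Hy.
- by move=> n _; rewrite -(Dr n); exact: (proj2 (key n)).
Qed.
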